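(* Let $G$ be a graph with a vertex $r$ that belongs to every minimum vertex cover of $G$ (so $\mathrm{OPT}(G-r)+1=\mathrm{OPT}(G)$), and let $Y$ be a minimal blocking set of $G$. Then $Y$ is also a minimal blocking set of $G-r$.
   Context: $\mathrm{OPT}(G)$ is the minimum vertex cover size; minimum vertex covers have size $\mathrm{OPT}(G)$. $Y\subseteq V(G)$ is a blocking set if no minimum vertex cover contains $Y$; minimal if no proper subset is a blocking set. *)

(* Defs.v *)
(* A graph G is given by a vertex set V : {set T} over a
   finite type T together with a symmetric irreflexive edge relation e : rel T;
   the edges of G are the pairs x,y of V with e x y.  G - r is (V :\ r, e). *)
From mathcomp Require Import all_boot.
Set Implicit Arguments. Unset Strict Implicit. Unset Printing Implicit Defensive.

Definition vertex_cover {T : finType} (V : {set T}) (e : rel T) (C : {set T}) : bool :=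
  (C \subset V) && [forall x in V, forall y in V, e x y ==> (x \in C) || (y \in C)].

(* OPT(G): minimum size of a vertex cover; #|V| is a valid default since
   V itself is always a vertex cover *)
Definition OPT {T : finType} (V : {set T}) (e : rel T) : nat :=
  \big[minn/#|V|]_(C in powerset V | vertex_cover V e C) #|C|.

Definition min_vertex_cover {T : finType} (V : {set T}) (e : rel T) (C : {set T}) : bool :=
  vertex_cover V e C && (#|C| == OPT V e).

Definition blocking {T : finType} (V : {set T}) (e : rel T) (Y : {set T}) : bool :=
  (Y \subset V) && [forall C : {set T}, min_vertex_cover V e C ==> ~~ (Y \subset C)].

Definition minimal_blocking {T : finType} (V : {set T}) (e : rel T) (Y : {set T}) : bool :=
  blocking V e Y && [forall Z : {set T}, (Z \proper Y) ==> ~~ blocking V e Z].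

(* Main.v *)
Require Import Defs.
From mathcomp Require Import all_boot.
Set Implicit Arguments. Unset Strict Implicit. Unset Printing Implicit Defensive.

Section S.
Variables (T : finType) (e : rel T).

Lemma OPT_le (V C : {set T}) : vertex_cover V e C -> OPT V e <= #|C|.
Proof.
move=> hC; rewrite /OPT.
have hCP : (C \in powerset V) && vertex_cover V e C.
  by rewrite powersetE hC andbT; case/andP: hC.
have gen : forall (s : seq {set T}), C \in s ->
  \big[minn/#|V|]_(i <- s | (i \in powerset V) && vertex_cover V e i) #|i| <= #|C|.
  elim=> [//|a s IH]; rewrite in_cons big_cons => /orP[/eqP<-|Cs].
    by rewrite hCP geq_minl.
  case: ifP => _; [exact: leq_trans (geq_minr _ _) (IH Cs) | exact: IH].
by apply: gen; rewrite mem_index_enum.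
Qed.

Lemma OPT_att (V : {set T}) : exists C, vertex_cover V e C /\ #|C| = OPT V e.
Proof.
rewrite /OPT; apply: (big_ind (fun n => exists C, vertex_cover V e C /\ #|C| = n)).
- exists V; split=> //; rewrite /vertex_cover subxx /=.
  by apply/forall_inP => x xV; apply/forall_inP => y _; rewrite xV implybT.
- move=> a b [Ca [h1 h2]] [Cb [h3 h4]]; rewrite /minn; case: ifP => _.
  + by exists Ca. + by exists Cb.
- by move=> C /andP[_ hC]; exists C.
Qed.

Lemma vc_del (V C : {set T}) r : vertex_cover V e C -> vertex_cover (V :\ r) e (C :\ r).
Proof.
case/andP=> sCV /forall_inP h; apply/andP; split.
  by apply: setSD.
apply/forall_inP => x; rewrite in_setD1 => /andP[xr xV].
apply/forall_inP => y; rewrite in_setD1 => /andP[yr yV].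
apply/implyP => exy; have /forall_inP/(_ y yV)/implyP/(_ exy) := h x xV.
by rewrite !in_setD1 xr yr.
Qed.

Lemma vc_add (V D : {set T}) r : r \in V -> vertex_cover (V :\ r) e D -> vertex_cover V e (r |: D).
Proof.
move=> rV /andP[sDV /forall_inP h]; apply/andP; split.
  rewrite subUset sub1set rV /=; apply: subset_trans sDV _; exact: subD1set.
apply/forall_inP => x xV; apply/forall_inP => y yV; apply/implyP => exy.
rewrite !in_setU1.
have [->|xr] := eqVneq x r; first by [].
have [->|yr] := eqVneq y r; first by rewrite orbT.
have xV' : x \in V :\ r by rewrite in_setD1 xr.
have yV' : y \in V :\ r by rewrite in_setD1 yr.
by have /forall_inP/(_ y yV')/implyP/(_ exy) := h x xV'.
Qed.

End S.

Theorem mainTheorem19 (T : finType) (V : {set T}) (e : rel T)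
  (e_sym : symmetric e) (e_irr : irreflexive e) (r : T) (rV : r \in V)
  (r_in_all : forall C : {set T}, min_vertex_cover V e C -> r \in C)
  (Y : {set T}) (hY : minimal_blocking V e Y) :
  minimal_blocking (V :\ r) e Y.
Proof.
have hopt : OPT V e = (OPT (V :\ r) e).+1.
  have [C0 [hC0 sC0]] := OPT_att e V.
  have rC0 : r \in C0 by apply: r_in_all; rewrite /min_vertex_cover hC0 sC0 eqxx.
  have [D0 [hD0 sD0]] := OPT_att e (V :\ r).
  have rD0 : r \notin D0.
    by apply/negP => /(subsetP (proj1 (andP hD0))); rewrite in_setD1 eqxx.
  have h1 := OPT_le (vc_del r hC0).
  have h2 := OPT_le (vc_add rV hD0).
  rewrite (cardsD1 r C0) rC0 in sC0.
  rewrite cardsU1 rD0 in h2.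
  apply/eqP; rewrite eqn_leq; apply/andP; split.
    by rewrite -sD0.
  by rewrite -sC0 /= ltnS.
have mdel : forall C, min_vertex_cover V e C -> min_vertex_cover (V :\ r) e (C :\ r).
  move=> C hC; have rC := r_in_all C hC; case/andP: hC => hC /eqP sC.
  rewrite /min_vertex_cover vc_del //=.
  by move: sC; rewrite (cardsD1 r C) rC hopt add1n => -[->].
have madd : forall D, min_vertex_cover (V :\ r) e D -> min_vertex_cover V e (r |: D).
  move=> D /andP[hD /eqP sD].
  have rD : r \notin D.
    by apply/negP => /(subsetP (proj1 (andP hD))); rewrite in_setD1 eqxx.
  by rewrite /min_vertex_cover vc_add //= cardsU1 rD sD hopt.
case/andP: hY => /andP[sYV /forallP hb] /forallP hmin.
have rY : r \notin Y.
  apply/negP => rY.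
  have pr : Y :\ r \proper Y by rewrite properD1.
  have := implyP (hmin (Y :\ r)) pr; rewrite /blocking.
  rewrite (subset_trans (subD1set Y r) sYV) /= negb_forall => /existsP[C].
  rewrite negb_imply negbK => /andP[mC sub].
  have := implyP (hb C) mC; move=> /negP; apply.
  apply/subsetP => x xY; have [->|xr] := eqVneq x r; first exact: r_in_all.
  by apply: (subsetP sub); rewrite in_setD1 xr.
have sYVr : Y \subset V :\ r.
  by apply/subsetP => x xY; rewrite in_setD1 (subsetP sYV) // andbT;
     apply: contraNneq rY => <-.
apply/andP; split.
  rewrite /blocking sYVr /=; apply/forallP => D; apply/implyP => mD.
  apply/negP => sub; have := implyP (hb (r |: D)) (madd D mD); move=> /negP; apply.
  exact: subset_trans sub (subsetUr _ _).
apply/forallP => Z; apply/implyP => pZ.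
have := implyP (hmin Z) pZ; have sZY := proper_sub pZ.
rewrite /blocking (subset_trans sZY sYV) (subset_trans sZY sYVr) /=.
rewrite !negb_forall => /existsP[C]; rewrite negb_imply negbK => /andP[mC sub].
apply/existsP; exists (C :\ r); rewrite negb_imply negbK mdel //=.
apply/subsetP => x xZ; rewrite in_setD1 (subsetP sub) // andbT.
by apply: contraNneq rY => <-; apply: (subsetP sZY).
Qed.
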